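(* Let $v$ be the linear classifier defined by $\vec w\in\mathbb{R}^n$ and $q\in\mathbb{R}$, and let $i\neq j$. If $w_i\ge w_j>0$, then $\mathrm{Vol}(\mathit{Piv}_j)\le\mathrm{Vol}(\mathit{Piv}_i)$.
   Context: The linear classifier defined by $\vec w$ and $q$ is $v:[0,1]^n\to\{0,1\}$, $v(\vec x)=1$ iff $\vec x\cdot\vec w\ge q$. For $\vec x\in[0,1]^n$, $b\in[0,1]$, $(\vec x_{-k},b)$ is $\vec x$ with $k$-th coordinate replaced by $b$. $\mathit{Piv}_k=\{(\vec x,b)\in[0,1]^{n+1}: v(\vec x)=0,\ v(\vec x_{-k},b)=1\}$, and $\mathrm{Vol}$ is Lebesgue measure on $\mathbb{R}^{n+1}$. *)

(* Defs.v *)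
From Stdlib Require Import Reals Lra.
Open Scope R_scope.

Fixpoint fsum (m : nat) (f : nat -> R) : R :=
  match m with O => 0 | S m' => fsum m' f + f m' end.
Fixpoint fprod (m : nat) (f : nat -> R) : R :=
  match m with O => 1 | S m' => fprod m' f * f m' end.

(* A point of R^m is represented by p : nat -> R, only coordinates l < m matter. *)

(* Lebesgue (outer) measure on R^m: infimum of the total volume of countable
   covers by closed boxes [lo k, hi k].  [box_cover_bound m S c] says that S has
   such a cover with total volume (sum of the series) at most c. *)
Definition box_cover_bound (m : nat) (S : (nat -> R) -> Prop) (c : R) : Prop :=
  exists lo hi : nat -> nat -> R,
    (forall k l, lo k l <= hi k l) /\
    (forall p, S p -> exists k, forall l, (l < m)%nat -> lo k l <= p l <= hi k l) /\
    (forall N, fsum N (fun k => fprod m (fun l => hi k l - lo k l)) <= c).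

(* [is_Vol m S v] : v is the Lebesgue measure of S in R^m (greatest lower bound
   of the admissible cover volumes).  For Lebesgue-measurable S this is Vol S. *)
Definition is_Vol (m : nat) (S : (nat -> R) -> Prop) (v : R) : Prop :=
  (forall c, box_cover_bound m S c -> v <= c) /\
  (forall v', (forall c, box_cover_bound m S c -> v' <= c) -> v' <= v).

Definition dot (n : nat) (w x : nat -> R) : R := fsum n (fun l => w l * x l).

Definition classif (n : nat) (w : nat -> R) (q : R) (x : nat -> R) : bool :=
  if Rle_dec q (dot n w x) then true else false.

Definition replace_coord (x : nat -> R) (k : nat) (b : R) : nat -> R :=
  fun l => if Nat.eq_dec l k then b else x l.

(* Piv_k as a subset of [0,1]^{n+1}; a point p encodes (x, b) with
   x = (p 0, ..., p (n-1)) and b = p n. *)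
Definition Piv (n : nat) (w : nat -> R) (q : R) (k : nat) (p : nat -> R) : Prop :=
  (forall l, (l <= n)%nat -> 0 <= p l <= 1) /\
  classif n w q p = false /\
  classif n w q (replace_coord p k (p n)) = true.

(* Main.v *)
Require Import Defs.
From Stdlib Require Import Reals Lra Lia List ClassicalEpsilon.
Import ListNotations.
Open Scope R_scope.

Lemma fsum_ext m f g : (forall l, (l < m)%nat -> f l = g l) -> fsum m f = fsum m g.
Proof. induction m; simpl; intros H; auto. rewrite IHm by (intros; apply H; lia). rewrite H by lia. auto. Qed.

Lemma fsum_le m f g : (forall l, (l < m)%nat -> f l <= g l) -> fsum m f <= fsum m g.
Proof. induction m; simpl; intros H; [lra|]. assert (fsum m f <= fsum m g) by (apply IHm; intros; apply H; lia).
 assert (f m <= g m) by (apply H; lia). lra. Qed.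

Lemma fsum_nonneg m f : (forall l, (l < m)%nat -> 0 <= f l) -> 0 <= fsum m f.
Proof. intros H. replace 0 with (fsum m (fun _ => 0)). apply fsum_le; auto.
 induction m; simpl; auto. rewrite IHm; [lra|]. intros; apply H; lia. Qed.

Lemma fsum_plus m f g : fsum m (fun l => f l + g l) = fsum m f + fsum m g.
Proof. induction m; simpl; [lra|]. rewrite IHm; lra. Qed.

Lemma fsum_scal m c f : fsum m (fun l => c * f l) = c * fsum m f.
Proof. induction m; simpl; [lra|]. rewrite IHm; lra. Qed.

Lemma fsum_split m k f : (k < m)%nat ->
  fsum m f = fsum m (fun l => if Nat.eqb l k then 0 else f l) + f k.
Proof. induction m; intros Hk; [lia|]. simpl. destruct (Nat.eq_dec k m).
 - subst. rewrite Nat.eqb_refl.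
   rewrite (fsum_ext m (fun l => if Nat.eqb l m then 0 else f l) f); [lra|].
   intros l Hl. destruct (Nat.eqb_spec l m); [lia|auto].
 - rewrite IHm by lia. destruct (Nat.eqb_spec m k); [lia|]. lra. Qed.

Lemma fsum_mono_N N N' f : (forall l, 0 <= f l) -> (N <= N')%nat -> fsum N f <= fsum N' f.
Proof. intros H HN. induction HN as [|N2 HN IH]; simpl; [lra|]. pose proof (H N2). lra. Qed.

Lemma fsum_shift m f : fsum (S m) f = f 0%nat + fsum m (fun k => f (S k)).
Proof. induction m; simpl in *; [lra|]. rewrite IHm. lra. Qed.

Lemma fprod_ext m f g : (forall l, (l < m)%nat -> f l = g l) -> fprod m f = fprod m g.
Proof. induction m; simpl; intros H; auto. rewrite IHm by (intros; apply H; lia). rewrite H by lia. auto. Qed.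

Lemma fprod_nonneg m f : (forall l, (l < m)%nat -> 0 <= f l) -> 0 <= fprod m f.
Proof. induction m; simpl; intros H; [lra|]. apply Rmult_le_pos; [apply IHm; intros; apply H; lia| apply H; lia]. Qed.

Definition upd (f : nat -> R) (k : nat) (v : R) : nat -> R :=
  fun l => if Nat.eqb l k then v else f l.

Lemma fprod_extract m k f : (k < m)%nat -> fprod m f = f k * fprod m (upd f k 1).
Proof. induction m; intros Hk; [lia|]. simpl. unfold upd at 2. destruct (Nat.eq_dec k m).
 - subst. rewrite Nat.eqb_refl.
   rewrite (fprod_ext m (upd f m 1) f); [lra|].
   intros l Hl. unfold upd. destruct (Nat.eqb_spec l m); [lia|auto].
 - rewrite IHm by lia. destruct (Nat.eqb_spec m k); [lia|]. lra. Qed.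

Lemma fprod_upd m k f v : (k < m)%nat -> fprod m (upd f k v) = v * fprod m (upd f k 1).
Proof. intros Hk. rewrite (fprod_extract m k) by auto. unfold upd at 1; rewrite Nat.eqb_refl.
 f_equal. apply fprod_ext. intros l _. unfold upd. destruct (Nat.eqb l k); auto. Qed.

Definition lsum {A} (f : A -> R) (L : list A) : R := fold_right (fun x acc => f x + acc) 0 L.

Lemma lsum_app {A} (f : A -> R) L1 L2 : lsum f (L1 ++ L2) = lsum f L1 + lsum f L2.
Proof. induction L1; simpl; [lra|]. rewrite IHL1; lra. Qed.

Lemma lsum_flat_map {A B} (f : B -> R) (g : A -> list B) L :
  lsum f (flat_map g L) = lsum (fun x => lsum f (g x)) L.
Proof. induction L; simpl; auto. rewrite lsum_app, IHL. auto. Qed.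

Lemma lsum_map {A B} (f : B -> R) (g : A -> B) L : lsum f (map g L) = lsum (fun x => f (g x)) L.
Proof. induction L; simpl; auto. rewrite IHL; auto. Qed.

Lemma lsum_le {A} (f g : A -> R) L : (forall x, In x L -> f x <= g x) -> lsum f L <= lsum g L.
Proof. induction L; simpl; intros H; [lra|]. assert (f a <= g a) by auto.
 assert (lsum f L <= lsum g L) by auto. lra. Qed.

Lemma lsum_ext {A} (f g : A -> R) L : (forall x, In x L -> f x = g x) -> lsum f L = lsum g L.
Proof. induction L; simpl; intros H; auto. rewrite H, IHL; auto. Qed.

Lemma lsum_scal {A} (f : A -> R) c L : lsum (fun x => c * f x) L = c * lsum f L.
Proof. induction L; simpl; [lra|]. rewrite IHL; lra. Qed.

Lemma lsum_nonneg {A} (f : A -> R) L : (forall x, In x L -> 0 <= f x) -> 0 <= lsum f L.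
Proof. induction L; simpl; intros H; [lra|]. assert (0 <= f a) by auto.
 assert (0 <= lsum f L) by auto. lra. Qed.

Lemma lsum_seq_const c M : lsum (fun _ : nat => c) (seq 0 M) = INR M * c.
Proof. generalize 0%nat. induction M; intros s. simpl. lra.
 rewrite (S_INR M). simpl seq. change (lsum (fun _ : nat => c) (s :: seq (S s) M)) with (c + lsum (fun _ : nat => c) (seq (S s) M)).
 rewrite IHM. lra. Qed.

Lemma lsum_fsum {A} (f : A -> R) L d :
  fsum (length L) (fun c => f (nth c L d)) = lsum f L.
Proof. induction L; [reflexivity|]. change (length (a::L)) with (S (length L)). rewrite fsum_shift. simpl. rewrite IHL. auto. Qed.
Lemma Rdiv_nn a b : 0 <= a -> 0 < b -> 0 <= a / b.
Proof. intros. unfold Rdiv. apply Rmult_le_pos; [auto| left; apply Rinv_0_lt_compat; auto]. Qed.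

Definition box := ((nat -> R) * (nat -> R))%type.
Definition bvol (m : nat) (b : box) : R := fprod m (fun l => snd b l - fst b l).
Definition inb (m : nat) (b : box) (p : nat -> R) : Prop :=
  forall l, (l < m)%nat -> fst b l <= p l <= snd b l.
Definition okb (b : box) : Prop := forall l, fst b l <= snd b l.

Lemma bvol_nonneg m b : okb b -> 0 <= bvol m b.
Proof. intros H. unfold bvol. apply fprod_nonneg. intros l _. pose proof (H l). lra. Qed.

Definition cut (M d : nat) (b : box) (k : nat) : box :=
  (upd (fst b) d (fst b d + INR k * (snd b d - fst b d) / INR M),
   upd (snd b) d (fst b d + INR (S k) * (snd b d - fst b d) / INR M)).

Fixpoint subdiv (M d : nat) (b : box) : list box :=
  match d with
  | O => [b]
  | S d' => flat_map (fun Q => map (cut M d' Q) (seq 0 M)) (subdiv M d' b)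
  end.

Lemma subdiv_prop M d B : (1 <= M)%nat -> okb B -> forall Q, In Q (subdiv M d B) ->
  okb Q /\ (forall l, (d <= l)%nat -> fst Q l = fst B l /\ snd Q l = snd B l) /\
  (forall l, (l < d)%nat -> snd Q l - fst Q l = (snd B l - fst B l) / INR M).
Proof.
  intros HM HB. assert (HM' : 0 < INR M) by (apply lt_0_INR; lia).
  induction d; intros Q HQ.
  - simpl in HQ. destruct HQ as [<-|[]]. split; auto. split; auto. intros; lia.
  - simpl in HQ. apply in_flat_map in HQ. destruct HQ as [Q0 [HQ0 HQ]].
    apply in_map_iff in HQ. destruct HQ as [k [<- Hk]]. apply in_seq in Hk.
    destruct (IHd Q0 HQ0) as [ok0 [ag0 ln0]].
    destruct (ag0 d (le_n d)) as [e1 e2].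
    assert (HL : 0 <= snd B d - fst B d) by (pose proof (HB d); lra).
    split; [|split].
    + intros l. unfold cut, upd; cbn [fst snd]. destruct (Nat.eqb_spec l d).
      * subst. rewrite e1, e2. rewrite S_INR.
        assert (0 <= (snd B d - fst B d) / INR M) by (apply Rdiv_nn; lra).
        replace ((INR k + 1) * (snd B d - fst B d) / INR M) with (INR k * (snd B d - fst B d) / INR M + (snd B d - fst B d) / INR M) by (field; lra). lra.
      * apply ok0.
    + intros l Hl. unfold cut, upd; cbn [fst snd]. destruct (Nat.eqb_spec l d); [lia|]. apply ag0; lia.
    + intros l Hl. unfold cut, upd; cbn [fst snd]. destruct (Nat.eqb_spec l d).
      * subst. rewrite e1, e2, S_INR. field. lra.
      * apply ln0; lia.
Qed.

Lemma find_k N x : 0 <= x <= INR (S N) -> exists k, (k <= N)%nat /\ INR k <= x <= INR k + 1.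
Proof. induction N; intros Hx.
 - exists 0%nat. simpl in *. split; [lia|lra].
 - destruct (Rle_dec x (INR (S N))).
   + destruct IHN as [k [Hk Hk2]]; [lra|]. exists k; split; [lia|lra].
   + exists (S N). split; [lia|]. rewrite S_INR in *. rewrite S_INR in Hx. lra.
Qed.

Lemma subdiv_cover M d B : (1 <= M)%nat -> okb B -> forall mm p, inb mm B p ->
  exists Q, In Q (subdiv M d B) /\ inb mm Q p.
Proof.
  intros HM HB mm p Hp. assert (HM' : 0 < INR M) by (apply lt_0_INR; lia).
  induction d.
  - exists B. simpl. auto.
  - destruct IHd as [Q0 [HQ0 Hin]].
    destruct (subdiv_prop M d B HM HB Q0 HQ0) as [ok0 [ag0 ln0]].
    destruct (ag0 d (le_n d)) as [e1 e2].
    assert (Hex : exists k, (k < M)%nat /\ ((d < mm)%nat -> 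
       fst Q0 d + INR k * (snd Q0 d - fst Q0 d) / INR M <= p d <=
       fst Q0 d + INR (S k) * (snd Q0 d - fst Q0 d) / INR M)).
    { destruct (Compare_dec.le_lt_dec mm d) as [Hd|Hd].
      - exists 0%nat. split; [lia|]. intros; lia.
      - destruct (Hin d Hd) as [h1 h2]. set (L := snd Q0 d - fst Q0 d).
        destruct (Req_dec L 0) as [L0|L0].
        + exists 0%nat. split; [lia|]. intros _. rewrite L0. unfold L in L0. replace (INR 1) with 1 by reflexivity.
          unfold Rdiv. rewrite !Rmult_0_r. lra.
        + assert (HL : 0 < L) by (unfold L in *; pose proof (ok0 d); lra).
          destruct M as [|M0]; [lia|].
          destruct (find_k M0 ((p d - fst Q0 d) * INR (S M0) / L)) as [k [Hk [k1 k2]]].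
          { split. apply Rdiv_nn; [|lra]. apply Rmult_le_pos; [lra|lra].
            apply (Rmult_le_reg_r L); [lra|].
            replace ((p d - fst Q0 d) * INR (S M0) / L * L) with ((p d - fst Q0 d) * INR (S M0)) by (field; lra).
            rewrite (Rmult_comm (INR (S M0)) L). apply Rmult_le_compat_r; [lra|unfold L; lra]. }
          exists k. split; [lia|]. intros _. rewrite (S_INR k).
          assert (E : p d = fst Q0 d + (p d - fst Q0 d) * INR (S M0) / L * L / INR (S M0)) by (field; lra).
          set (x := (p d - fst Q0 d) * INR (S M0) / L) in *.
          rewrite E. split.
          * apply Rplus_le_compat_l. unfold Rdiv. rewrite !Rmult_assoc. apply Rmult_le_compat_r; [|lra].
            apply Rmult_le_pos; [lra|]. left; apply Rinv_0_lt_compat; lra.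
          * apply Rplus_le_compat_l. unfold Rdiv. rewrite !Rmult_assoc. apply Rmult_le_compat_r; [|lra].
            apply Rmult_le_pos; [lra|]. left; apply Rinv_0_lt_compat; lra. }
    destruct Hex as [k [HkM Hk]].
    destruct (Compare_dec.le_lt_dec mm d) as [Hd|Hd].
    + exists (cut M d Q0 0). split.
      * simpl. apply in_flat_map. exists Q0. split; auto. apply in_map. apply in_seq. lia.
      * intros l Hl. unfold cut, upd; cbn [fst snd]. destruct (Nat.eqb_spec l d); [lia|]. auto.
    +       exists (cut M d Q0 k). split.
      * simpl. apply in_flat_map. exists Q0. split; auto. apply in_map. apply in_seq. lia.
      * intros l Hl. unfold cut, upd; cbn [fst snd]. destruct (Nat.eqb_spec l d).
        -- subst. apply Hk. lia.
        -- auto.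
Qed.
Definition blen (b : box) : nat -> R := fun l => snd b l - fst b l.

Lemma subdiv_sum M d B mm : (1 <= M)%nat -> (d <= mm)%nat ->
  lsum (fun Q => fprod mm (blen Q)) (subdiv M d B) = fprod mm (blen B).
Proof.
  intros HM. assert (HM' : 0 < INR M) by (apply lt_0_INR; lia).
  induction d; intros Hd.
  - simpl. lra.
  - simpl subdiv. rewrite lsum_flat_map. rewrite <- IHd by lia.
    apply lsum_ext. intros Q _. rewrite lsum_map.
    rewrite (lsum_ext _ (fun _ => blen Q d / INR M * fprod mm (upd (blen Q) d 1))).
    + rewrite lsum_seq_const. rewrite (fprod_extract mm d (blen Q)) by lia. field. lra.
    + intros k _. rewrite <- fprod_upd by lia. apply fprod_ext. intros l _.
      unfold blen, cut, upd; cbn [fst snd]. destruct (Nat.eqb_spec l d); auto.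
      subst. rewrite S_INR. field. lra.
Qed.

Lemma lsum_plus {A} (f g : A -> R) L : lsum (fun x => f x + g x) L = lsum f L + lsum g L.
Proof. induction L; simpl; [lra|]. rewrite IHL; lra. Qed.

Lemma fsum_minus m f g : fsum m f - fsum m g = fsum m (fun l => f l - g l).
Proof. induction m; simpl; [lra|]. rewrite <- IHm; lra. Qed.

Lemma fsum_div m f c : c <> 0 -> fsum m (fun l => f l / c) = fsum m f / c.
Proof. intros Hc. induction m; simpl; [field; auto|]. rewrite IHm; field; auto. Qed.

Definition clamp (lo hi x : R) : R := Rmin hi (Rmax lo x).

Lemma clamp_lip lo hi t1 t2 : lo <= hi -> t1 <= t2 -> (hi - clamp lo hi t1) + (clamp lo hi t2 - lo) <= (hi - lo) + (t2 - t1).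
Proof. intros. unfold clamp, Rmax. destruct (Rle_dec lo t1); destruct (Rle_dec lo t2); unfold Rmin;
 repeat match goal with |- context [Rle_dec ?x ?y] => destruct (Rle_dec x y) end; lra. Qed.

Lemma term_bounds c x y z : x <= z <= y ->
  Rmin (c * x) (c * y) <= c * z <= Rmax (c * x) (c * y) /\
  Rmax (c * x) (c * y) - Rmin (c * x) (c * y) = Rabs c * (y - x).
Proof.
  intros Hz. unfold Rmin, Rmax. destruct (Rle_lt_dec 0 c) as [Hc|Hc].
  - rewrite (Rabs_pos_eq c Hc).
    assert (c * x <= c * z) by (apply Rmult_le_compat_l; lra).
    assert (c * z <= c * y) by (apply Rmult_le_compat_l; lra).
    destruct (Rle_dec (c*x) (c*y)); (split; [split|]); nra.
  - rewrite (Rabs_left c Hc).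
    assert (c * z <= c * x) by nra. assert (c * y <= c * z) by nra.
    destruct (Rle_dec (c*x) (c*y)); (split; [split|]); nra.
Qed.

Lemma fsum_bounds n cf (lo hi p : nat -> R) :
  (forall l, (l < n)%nat -> lo l <= p l <= hi l) ->
  fsum n (fun l => Rmin (cf l * lo l) (cf l * hi l)) <= fsum n (fun l => cf l * p l) <=
  fsum n (fun l => Rmax (cf l * lo l) (cf l * hi l)).
Proof. intros H. split; apply fsum_le; intros l Hl; destruct (term_bounds (cf l) _ _ _ (H l Hl)); lra. Qed.

Lemma split_box (n : nat) (cf : nat -> R) (a q : R) (B : box) (eps : R) :
  0 < a -> 0 < eps -> okb B ->
  exists L1 L2 : list box,
    (forall b, In b L1 -> okb b) /\ (forall b, In b L2 -> okb b) /\
    (forall p, inb (S n) B p -> q <= fsum n (fun l => cf l * p l) + a * p n ->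
        exists b, In b L1 /\ inb (S n) b p) /\
    (forall p, inb (S n) B p -> fsum n (fun l => cf l * p l) + a * p n < q ->
        exists b, In b L2 /\ inb (S n) b p) /\
    lsum (bvol (S n)) L1 + lsum (bvol (S n)) L2 <= bvol (S n) B + eps.
Proof.
  intros Ha He HB.
  set (K := fsum n (fun l => Rabs (cf l) * blen B l)).
  set (V := fprod n (blen B)).
  assert (HK : 0 <= K) by (apply fsum_nonneg; intros l _; apply Rmult_le_pos; [apply Rabs_pos| unfold blen; pose proof (HB l); lra]).
  assert (HV : 0 <= V) by (apply fprod_nonneg; intros l _; unfold blen; pose proof (HB l); lra).
  destruct (INR_archimed 1 (K * V / (a * eps))) as [M0 HM0]; [lra|].
  set (M := S M0).
  assert (HM : (1 <= M)%nat) by (unfold M; lia).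
  assert (HMr : 0 < INR M) by (apply lt_0_INR; lia).
  assert (HMb : K * V / (a * eps) < INR M) by (unfold M; rewrite S_INR; lra).
  set (mQ := fun Q : box => fsum n (fun l => Rmin (cf l * fst Q l) (cf l * snd Q l))).
  set (MQ := fun Q : box => fsum n (fun l => Rmax (cf l * fst Q l) (cf l * snd Q l))).
  set (box1 := fun Q : box => (upd (fst Q) n (clamp (fst Q n) (snd Q n) ((q - MQ Q) / a)), snd Q)).
  set (box2 := fun Q : box => (fst Q, upd (snd Q) n (clamp (fst Q n) (snd Q n) ((q - mQ Q) / a)))).
  set (Qs := subdiv M n B).
  exists (map box1 Qs), (map box2 Qs).
  assert (Hclamp : forall lo hi x, lo <= hi -> lo <= clamp lo hi x <= hi).
  { intros lo hi x Hlh. unfold clamp, Rmin, Rmax.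
    destruct (Rle_dec lo x); destruct (Rle_dec hi _); lra. }
  split; [|split; [|split; [|split]]].
  - intros b Hb. apply in_map_iff in Hb. destruct Hb as [Q [<- HQ]].
    destruct (subdiv_prop M n B HM HB Q HQ) as [okQ _].
    intros l. unfold box1, upd; cbn [fst snd]. destruct (Nat.eqb_spec l n).
    + subst. apply Hclamp. apply okQ.
    + apply okQ.
  - intros b Hb. apply in_map_iff in Hb. destruct Hb as [Q [<- HQ]].
    destruct (subdiv_prop M n B HM HB Q HQ) as [okQ _].
    intros l. unfold box2, upd; cbn [fst snd]. destruct (Nat.eqb_spec l n).
    + subst. apply Hclamp. apply okQ.
    + apply okQ.
  - intros p Hp HH. destruct (subdiv_cover M n B HM HB (S n) p Hp) as [Q [HQ HpQ]].
    exists (box1 Q). split; [apply in_map; auto|].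
    intros l Hl. unfold box1, upd; cbn [fst snd]. destruct (Nat.eqb_spec l n); [|apply HpQ; auto].
    subst. split; [|apply HpQ; lia].
    destruct (HpQ n (Nat.lt_succ_diag_r n)) as [h1 h2].
    assert (fsum n (fun l => cf l * p l) <= MQ Q).
    { apply (fsum_bounds n cf (fst Q) (snd Q) p). intros; apply HpQ; lia. }
    assert ((q - MQ Q) / a <= p n).
    { apply (Rmult_le_reg_r a); [lra|]. unfold Rdiv. rewrite Rmult_assoc, Rinv_l by lra. lra. }
    unfold clamp, Rmin, Rmax. destruct (Rle_dec (fst Q n) _); destruct (Rle_dec (snd Q n) _); lra.
  - intros p Hp HH. destruct (subdiv_cover M n B HM HB (S n) p Hp) as [Q [HQ HpQ]].
    exists (box2 Q). split; [apply in_map; auto|].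
    intros l Hl. unfold box2, upd; cbn [fst snd]. destruct (Nat.eqb_spec l n); [|apply HpQ; auto].
    subst. split; [apply HpQ; lia|].
    destruct (HpQ n (Nat.lt_succ_diag_r n)) as [h1 h2].
    assert (mQ Q <= fsum n (fun l => cf l * p l)).
    { apply (fsum_bounds n cf (fst Q) (snd Q) p). intros; apply HpQ; lia. }
    assert (p n <= (q - mQ Q) / a).
    { apply (Rmult_le_reg_r a); [lra|]. unfold Rdiv. rewrite Rmult_assoc, Rinv_l by lra. lra. }
    unfold clamp, Rmin, Rmax. destruct (Rle_dec (fst Q n) _); destruct (Rle_dec (snd Q n) _); lra.
  - rewrite !lsum_map, <- lsum_plus.
    apply Rle_trans with (lsum (fun Q => fprod n (blen Q) * (blen B n + K / (a * INR M))) Qs).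
    + apply lsum_le. intros Q HQ.
      destruct (subdiv_prop M n B HM HB Q HQ) as [okQ [agQ lnQ]].
      destruct (agQ n (le_n n)) as [e1 e2].
      assert (Hdiff : MQ Q - mQ Q = K / INR M).
      { unfold MQ, mQ, K. rewrite fsum_minus, <- fsum_div by lra. apply fsum_ext. intros l Hl.
        destruct (term_bounds (cf l) (fst Q l) (snd Q l) (fst Q l)) as [_ E].
        { pose proof (okQ l); lra. }
        rewrite E. fold (blen Q l). unfold blen at 1. rewrite (lnQ l Hl). unfold blen. field. lra. }
      assert (Hle : mQ Q <= MQ Q).
      { unfold mQ, MQ. apply fsum_le. intros l _. unfold Rmin, Rmax. destruct (Rle_dec _ _); lra. }
      assert (Ht : (q - MQ Q) / a <= (q - mQ Q) / a).
      { unfold Rdiv. apply Rmult_le_compat_r; [left; apply Rinv_0_lt_compat; lra| lra]. }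
      assert (Htd : (q - mQ Q) / a - (q - MQ Q) / a = K / (a * INR M)).
      { replace ((q - mQ Q) / a - (q - MQ Q) / a) with ((MQ Q - mQ Q) / a) by (field; lra).
        rewrite Hdiff. field. lra. }
      unfold bvol. simpl fprod.
      rewrite (fprod_ext n (fun l => snd Q l - upd (fst Q) n (clamp (fst Q n) (snd Q n) ((q - MQ Q) / a)) l) (blen Q)).
      2:{ intros l Hl. unfold upd, blen. destruct (Nat.eqb_spec l n); [lia|auto]. }
      rewrite (fprod_ext n (fun l => upd (snd Q) n (clamp (fst Q n) (snd Q n) ((q - mQ Q) / a)) l - fst Q l) (blen Q)).
      2:{ intros l Hl. unfold upd, blen. destruct (Nat.eqb_spec l n); [lia|auto]. }
      unfold upd. rewrite Nat.eqb_refl.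
      assert (HP : 0 <= fprod n (blen Q)) by (apply fprod_nonneg; intros l _; unfold blen; pose proof (okQ l); lra).
      rewrite <- Rmult_plus_distr_l. apply Rmult_le_compat_l; [auto|].
      assert (Hcl : (snd Q n - clamp (fst Q n) (snd Q n) ((q - MQ Q) / a)) + (clamp (fst Q n) (snd Q n) ((q - mQ Q) / a) - fst Q n) <= (snd Q n - fst Q n) + ((q - mQ Q) / a - (q - MQ Q) / a)).
      { apply clamp_lip; [apply okQ|auto]. }
      unfold blen. rewrite <- e1, <- e2. lra.
    + rewrite (lsum_ext _ (fun Q => (blen B n + K / (a * INR M)) * fprod n (blen Q))) by (intros; ring).
      rewrite lsum_scal. unfold Qs. rewrite subdiv_sum by lia. fold V.
      unfold bvol. simpl fprod. fold (blen B). fold V.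
      assert (V * K / (a * INR M) <= eps).
      { apply (Rmult_le_reg_r (a * INR M)); [nra|]. 
        replace (V * K / (a * INR M) * (a * INR M)) with (V * K) by (field; nra).
        apply (Rmult_le_reg_r (/ (a * eps))). apply Rinv_0_lt_compat; nra.
        replace (eps * (a * INR M) * / (a * eps)) with (INR M) by (field; nra).
        unfold Rdiv in HMb. rewrite Rmult_comm. replace (/ (a*eps) * (V*K)) with (K * V * / (a * eps)) by ring. lra. }
      replace ((blen B n + K / (a * INR M)) * V) with (V * blen B n + V * K / (a * INR M)) by (field; nra).
      unfold blen at 1. lra.
Qed.
Definition zbox : box := (fun _ => 0, fun _ => 0).

Lemma zbox_ok : okb zbox.
Proof. intros l; simpl; lra. Qed.

Section Assemble.
Variable m : nat.
Variable F : nat -> list box.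
Definition Gl (k : nat) : list box := zbox :: F k.
Definition big (K : nat) : list box := concat (map Gl (seq 0 K)).

Lemma big_S K : big (S K) = big K ++ Gl K.
Proof. unfold big. rewrite seq_S, map_app, concat_app. simpl. rewrite app_nil_r. auto. Qed.

Lemma big_len K : (K <= length (big K))%nat.
Proof. induction K; [simpl; lia|]. rewrite big_S, length_app. unfold Gl; simpl. lia. Qed.

Lemma big_prefix K K' : (K <= K')%nat -> exists r, big K' = big K ++ r.
Proof. intros H. induction H. exists nil; rewrite app_nil_r; auto.
 destruct IHle as [r Hr]. exists (r ++ Gl m0). rewrite big_S, Hr, app_assoc. auto. Qed.

Definition stream (code : nat) : box := nth code (big (S code)) zbox.

Lemma stream_eq code K : (code < length (big K))%nat -> stream code = nth code (big K) zbox.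
Proof. intros H. unfold stream.
 destruct (big_prefix K (K + S code)) as [r1 H1]; [lia|].
 destruct (big_prefix (S code) (K + S code)) as [r2 H2]; [lia|].
 pose proof (big_len (S code)).
 rewrite <- (app_nth1 (big K) r1 zbox H). rewrite <- H1, H2. rewrite app_nth1; auto. Qed.

Lemma big_sum K : lsum (bvol (S m)) (big K) = fsum K (fun k => lsum (bvol (S m)) (F k)).
Proof. induction K; [reflexivity|]. rewrite big_S, lsum_app, IHK. simpl. unfold bvol at 2. simpl.
 replace (fprod m (fun _ => 0 - 0) * (0 - 0)) with 0 by ring. lra. Qed.

Lemma big_ok K : (forall k b, In b (F k) -> okb b) -> forall b, In b (big K) -> okb b.
Proof. intros H b Hb. unfold big in Hb. apply in_concat in Hb. destruct Hb as [L [HL Hb]].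
 apply in_map_iff in HL. destruct HL as [k [<- _]]. unfold Gl in Hb. destruct Hb as [<-|Hb].
 apply zbox_ok. eauto. Qed.
End Assemble.

Lemma assemble m (S0 : (nat -> R) -> Prop) (F : nat -> list box) c :
  (forall k b, In b (F k) -> okb b) ->
  (forall p, S0 p -> exists k b, In b (F k) /\ inb (S m) b p) ->
  (forall K, fsum K (fun k => lsum (bvol (S m)) (F k)) <= c) ->
  box_cover_bound (S m) S0 c.
Proof.
  intros Hok Hcov Hsum.
  assert (Hso : forall code, okb (stream F code)).
  { intros code. unfold stream. destruct (nth_in_or_default code (big F (S code)) zbox) as [Hi|Hd].
    - eapply big_ok; eauto.
    - rewrite Hd. apply zbox_ok. }
  exists (fun k => fst (stream F k)), (fun k => snd (stream F k)). split; [|split].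
  - intros k l. apply Hso.
  - intros p Hp. destruct (Hcov p Hp) as [k [b [Hb Hin]]].
    assert (Hb2 : In b (big F (S k))).
    { unfold big. apply in_concat. exists (Gl F k). split.
      - apply in_map. apply in_seq. lia.
      - right; auto. }
    destruct (In_nth _ _ zbox Hb2) as [idx [Hidx Hnth]].
    exists idx. intros l Hl. rewrite (stream_eq F idx (S k) Hidx), Hnth. apply Hin; auto.
  - intros N.
    apply Rle_trans with (fsum N (fun k => bvol (S m) (nth k (big F N) zbox))).
    + apply Req_le. apply fsum_ext. intros k Hk. change (fprod (S m) (fun l => snd (stream F k) l - fst (stream F k) l)) with (bvol (S m) (stream F k)).
      rewrite (stream_eq F k N); auto. pose proof (big_len F N). lia.
    + apply Rle_trans with (fsum (length (big F N)) (fun k => bvol (S m) (nth k (big F N) zbox))).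
      * apply fsum_mono_N; [|apply big_len]. intros l. apply bvol_nonneg.
        destruct (nth_in_or_default l (big F N) zbox) as [Hi|Hd].
        -- eapply big_ok; eauto.
        -- rewrite Hd. apply zbox_ok.
      * rewrite lsum_fsum, big_sum. apply Hsum.
Qed.

Lemma is_Vol_exists m S0 : (exists c, box_cover_bound m S0 c) -> exists v, is_Vol m S0 v.
Proof.
  intros [c0 Hc0].
  set (E := fun x => forall c, box_cover_bound m S0 c -> x <= c).
  destruct (completeness E) as [v [Hub Hlub]].
  - exists c0. intros x Hx. apply Hx; auto.
  - exists 0. intros c [lo [hi [_ [_ Hs]]]]. apply (Hs 0%nat).
  - exists v. split.
    + intros c Hc. apply Hlub. intros x Hx. apply Hx; auto.
    + intros v' Hv'. apply Hub. exact Hv'.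
Qed.
Lemma fprod_extract3 m x y z f : (x < m)%nat -> (y < m)%nat -> (z < m)%nat -> x <> y -> x <> z -> y <> z ->
  fprod m f = f x * f y * f z * fprod m (upd (upd (upd f x 1) y 1) z 1).
Proof. intros. rewrite (fprod_extract m x f) by auto. rewrite (fprod_extract m y (upd f x 1)) by auto.
 rewrite (fprod_extract m z (upd (upd f x 1) y 1)) by auto.
 assert (E1 : upd f x 1 y = f y) by (unfold upd; destruct (Nat.eqb_spec y x); [lia|auto]).
 assert (E2 : upd (upd f x 1) y 1 z = f z) by (unfold upd; destruct (Nat.eqb_spec z y); [lia|]; destruct (Nat.eqb_spec z x); [lia|auto]).
 rewrite E1, E2. ring. Qed.

Lemma fprod_perm3 m x y z f g : (x < m)%nat -> (y < m)%nat -> (z < m)%nat -> x <> y -> x <> z -> y <> z ->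
  (forall l, (l < m)%nat -> l <> x -> l <> y -> l <> z -> g l = f l) ->
  g x * g y * g z = f x * f y * f z -> fprod m g = fprod m f.
Proof. intros. rewrite (fprod_extract3 m x y z f), (fprod_extract3 m x y z g) by auto.
 rewrite H6. f_equal. apply fprod_ext. intros l Hl. unfold upd.
 destruct (Nat.eqb_spec l z); auto. destruct (Nat.eqb_spec l y); auto. destruct (Nat.eqb_spec l x); auto. Qed.

Lemma classif_true n w q x : classif n w q x = true <-> q <= dot n w x.
Proof. unfold classif. destruct (Rle_dec q (dot n w x)); split; intros; auto; try discriminate; lra. Qed.

Lemma classif_false n w q x : classif n w q x = false <-> dot n w x < q.
Proof. unfold classif. destruct (Rle_dec q (dot n w x)); split; intros; auto; try discriminate; lra. Qed.

Section Main.
Variables (n : nat) (w : nat -> R) (q : R) (i j : nat).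
Hypotheses (Hi : (i < n)%nat) (Hj : (j < n)%nat) (Hij : i <> j) (Hw : w j <= w i) (Hw0 : 0 < w j).

Definition Gx (k : nat) (p : nat -> R) : R := fsum n (fun l => (if Nat.eqb l k then 0 else w l) * p l).

Lemma dot_split k p : (k < n)%nat -> dot n w p = Gx k p + w k * p k.
Proof. intros Hk. unfold dot, Gx. rewrite (fsum_split n k) by auto. f_equal. apply fsum_ext. intros l _.
 destruct (Nat.eqb l k); ring. Qed.

Lemma dot_repl k p b : (k < n)%nat -> dot n w (replace_coord p k b) = Gx k p + w k * b.
Proof. intros Hk. rewrite (dot_split k) by auto. unfold replace_coord at 2. destruct (Nat.eq_dec k k); [|congruence].
 f_equal. unfold Gx. apply fsum_ext. intros l _. unfold replace_coord.
 destruct (Nat.eqb_spec l k); [ring|]. destruct (Nat.eq_dec l k); [congruence|auto]. Qed.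

Lemma Piv_iff k p : (k < n)%nat -> Piv n w q k p <->
  ((forall l, (l <= n)%nat -> 0 <= p l <= 1) /\ Gx k p + w k * p k < q /\ q <= Gx k p + w k * p n).
Proof. intros Hk. unfold Piv. rewrite classif_false, classif_true, (dot_repl k), (dot_split k) by auto. tauto. Qed.

Definition S2 (p : nat -> R) : R := fsum n (fun l => (if (Nat.eqb l i || Nat.eqb l j)%bool then 0 else w l) * p l).

Lemma Gj_S2 p : Gx j p = S2 p + w i * p i.
Proof. unfold Gx. rewrite (fsum_split n i) by auto. destruct (Nat.eqb_spec i j); [congruence|].
 f_equal. unfold S2. apply fsum_ext. intros l _. destruct (Nat.eqb l i); destruct (Nat.eqb l j); simpl; ring. Qed.

Lemma Gi_S2 p : Gx i p = S2 p + w j * p j.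
Proof. unfold Gx. rewrite (fsum_split n j) by auto. destruct (Nat.eqb_spec j i); [congruence|].
 f_equal. unfold S2. apply fsum_ext. intros l _. destruct (Nat.eqb l i); destruct (Nat.eqb l j); simpl; ring. Qed.

Definition psi (p : nat -> R) : nat -> R :=
  fun l => if Nat.eqb l i then p j else if Nat.eqb l j then p n else if Nat.eqb l n then p i else p l.

Lemma psi_i p : psi p i = p j.
Proof. unfold psi. rewrite Nat.eqb_refl. auto. Qed.
Lemma psi_j p : psi p j = p n.
Proof. unfold psi. destruct (Nat.eqb_spec j i); [congruence|]. rewrite Nat.eqb_refl. auto. Qed.
Lemma psi_n p : psi p n = p i.
Proof. unfold psi. destruct (Nat.eqb_spec n i); [lia|]. destruct (Nat.eqb_spec n j); [lia|]. rewrite Nat.eqb_refl. auto. Qed.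

Lemma S2_psi p : S2 (psi p) = S2 p.
Proof. unfold S2. apply fsum_ext. intros l Hl. unfold psi.
 destruct (Nat.eqb_spec l i); simpl; [ring|]. destruct (Nat.eqb_spec l j); simpl; [ring|].
 destruct (Nat.eqb_spec l n); [lia|auto]. Qed.

Lemma key_real s a c b wi wj : wj <= wi -> 0 < wj ->
  s + wi * a + wj * c < q -> q <= s + wi * a + wj * b -> s + wj * c + wi * b < q ->
  s + wj * b + wi * c < q /\ s + wi * c + wj * a < q.
Proof. intros. assert (c < b) by nra. split. nra.
 destruct (Rle_dec a c). nra. nra. Qed.

Lemma key p : Piv n w q j p ->
  (Piv n w q i p /\ q <= Gx j p + w j * p n) \/
  (Piv n w q i (psi p) /\ Gx j (psi p) + w j * psi p n < q).
Proof.
  intros Hp. pose proof Hp as Hp'. apply Piv_iff in Hp as [Hc [H1 H2]]; auto.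
  rewrite Gj_S2 in H1, H2.
  destruct (Rle_dec q (Gx i p + w i * p n)) as [Hq|Hq].
  - left. split; [|rewrite Gj_S2; auto]. apply Piv_iff; auto. split; auto. split; auto.
    rewrite Gi_S2. lra.
  - right. rewrite Gi_S2 in Hq.
    destruct (key_real (S2 p) (p i) (p j) (p n) (w i) (w j)) as [K1 K2]; auto; try lra.
    split.
    + apply Piv_iff; auto. split; [|split].
      * intros l Hl. unfold psi. destruct (Nat.eqb l i); [apply Hc; lia|].
        destruct (Nat.eqb l j); [apply Hc; lia|]. destruct (Nat.eqb l n); apply Hc; lia.
      * rewrite Gi_S2, S2_psi, psi_j, psi_i. lra.
      * rewrite Gi_S2, S2_psi, psi_j, psi_n. lra.
    + rewrite Gj_S2, S2_psi, psi_i, psi_n. lra.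
Qed.

Definition sig (l : nat) : nat := if Nat.eqb l i then n else if Nat.eqb l j then i else if Nat.eqb l n then j else l.
Definition psibox (b : box) : box := (fun l => fst b (sig l), fun l => snd b (sig l)).

Lemma psibox_ok b : okb b -> okb (psibox b).
Proof. intros H l. apply H. Qed.

Lemma psibox_vol b : bvol (S n) (psibox b) = bvol (S n) b.
Proof. unfold bvol, psibox; cbn [fst snd].
 apply (fprod_perm3 (S n) i j n); try lia.
 - intros l Hl H1 H2 H3. unfold sig. destruct (Nat.eqb_spec l i); [lia|]. destruct (Nat.eqb_spec l j); [lia|].
   destruct (Nat.eqb_spec l n); [lia|auto].
 - unfold sig. rewrite Nat.eqb_refl. destruct (Nat.eqb_spec j i); [lia|]. rewrite Nat.eqb_refl.
   destruct (Nat.eqb_spec n i); [lia|]. destruct (Nat.eqb_spec n j); [lia|]. rewrite Nat.eqb_refl. ring.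
Qed.

Lemma psibox_in b p : inb (S n) b (psi p) -> inb (S n) (psibox b) p.
Proof. intros H l Hl. unfold psibox; cbn [fst snd]. unfold sig.
 destruct (Nat.eqb_spec l i).
 - subst. pose proof (H n (Nat.lt_succ_diag_r n)) as Hn. rewrite psi_n in Hn. auto.
 - destruct (Nat.eqb_spec l j).
   + subst. pose proof (H i ltac:(lia)) as Hn. rewrite psi_i in Hn. auto.
   + destruct (Nat.eqb_spec l n).
     * subst. pose proof (H j ltac:(lia)) as Hn. rewrite psi_j in Hn. auto.
     * pose proof (H l Hl) as Hn. unfold psi in Hn.
       destruct (Nat.eqb_spec l i); [lia|]. destruct (Nat.eqb_spec l j); [lia|]. destruct (Nat.eqb_spec l n); [lia|]. auto.
Qed.

Lemma geom eps K : fsum K (fun k => eps / 2 ^ (S k)) = eps - eps / 2 ^ K.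
Proof. induction K; [simpl; field|].
 replace (fsum (S K) (fun k => eps / 2 ^ S k)) with (fsum K (fun k => eps / 2 ^ S k) + eps / 2 ^ S K) by reflexivity.
 rewrite IHK. assert (2 ^ K <> 0) by (apply pow_nonzero; lra). simpl pow. field. auto. Qed.

Lemma transfer c eps : box_cover_bound (S n) (Piv n w q i) c -> 0 < eps ->
  box_cover_bound (S n) (Piv n w q j) (c + eps).
Proof.
  intros [lo [hi [Hok [Hcov Hsum]]]] He.
  set (cf := fun l => if Nat.eqb l j then 0 else w l).
  set (P := fun k (LL : list box * list box) =>
    (forall b, In b (fst LL) -> okb b) /\ (forall b, In b (snd LL) -> okb b) /\
    (forall p, inb (S n) (lo k, hi k) p -> q <= fsum n (fun l => cf l * p l) + w j * p n ->
        exists b, In b (fst LL) /\ inb (S n) b p) /\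
    (forall p, inb (S n) (lo k, hi k) p -> fsum n (fun l => cf l * p l) + w j * p n < q ->
        exists b, In b (snd LL) /\ inb (S n) b p) /\
    lsum (bvol (S n)) (fst LL) + lsum (bvol (S n)) (snd LL) <= bvol (S n) (lo k, hi k) + eps / 2 ^ (S k)).
  assert (Hch : forall k, exists LL, P k LL).
  { intros k. assert (Hek : 0 < eps / 2 ^ (S k)) by (apply Rdiv_lt_0_compat; [lra| apply pow_lt; lra]).
    destruct (split_box n cf (w j) q (lo k, hi k) (eps / 2 ^ (S k)) Hw0 Hek) as [L1 [L2 HL]].
    { intros l. apply Hok. }
    exists (L1, L2). exact HL. }
  set (F := fun k => proj1_sig (constructive_indefinite_description _ (Hch k))).
  assert (HF : forall k, P k (F k)) by (intros k; exact (proj2_sig (constructive_indefinite_description _ (Hch k)))).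
  apply (assemble n _ (fun k => fst (F k) ++ map psibox (snd (F k)))).
  - intros k b Hb. destruct (HF k) as [o1 [o2 _]]. apply in_app_or in Hb. destruct Hb as [Hb|Hb]; auto.
    apply in_map_iff in Hb. destruct Hb as [b0 [<- Hb0]]. apply psibox_ok; auto.
  - intros p Hp. destruct (key p Hp) as [[Hpi HH]|[Hpi HH]].
    + destruct (Hcov p Hpi) as [k Hk]. destruct (HF k) as [_ [_ [c1 _]]].
      destruct (c1 p Hk HH) as [b [Hb Hin]]. exists k, b. split; auto. apply in_or_app; auto.
    + destruct (Hcov (psi p) Hpi) as [k Hk]. destruct (HF k) as [_ [_ [_ [c2 _]]]].
      destruct (c2 (psi p) Hk HH) as [b [Hb Hin]]. exists k, (psibox b). split.
      * apply in_or_app. right. apply in_map; auto.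
      * apply psibox_in; auto.
  - intros K. apply Rle_trans with (fsum K (fun k => bvol (S n) (lo k, hi k) + eps / 2 ^ (S k))).
    + apply fsum_le. intros k _. destruct (HF k) as [_ [_ [_ [_ Hs]]]].
      rewrite lsum_app, lsum_map. rewrite (lsum_ext (fun x => bvol (S n) (psibox x)) (bvol (S n))) by (intros; apply psibox_vol). auto.
    + rewrite fsum_plus, geom. pose proof (Hsum K).
      assert (0 < eps / 2 ^ K) by (apply Rdiv_lt_0_compat; [lra| apply pow_lt; lra]).
      unfold bvol; cbn [fst snd]. lra.
Qed.

Lemma cube_cover k : (k < n)%nat -> box_cover_bound (S n) (Piv n w q k) 1.
Proof.
  intros Hk. apply (assemble n _ (fun k => if Nat.eqb k 0 then [((fun _ => 0), (fun _ => 1))] else [])).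
  - intros k0 b Hb. destruct (Nat.eqb k0 0); simpl in Hb; [|contradiction].
    destruct Hb as [<-|[]]. intros l; simpl; lra.
  - intros p [Hc _]. exists 0%nat, ((fun _ => 0), (fun _ => 1)). split; [simpl; auto|].
    intros l Hl. simpl. apply Hc. lia.
  - assert (Hv : bvol (S n) ((fun _ => 0), (fun _ => 1)) = 1).
    { unfold bvol; cbn [fst snd]. generalize (S n). intros m0. induction m0; simpl; auto. rewrite IHm0. ring. }
    intros K. induction K; simpl fsum; [lra|].
    destruct (Nat.eqb_spec K 0).
    + subst. simpl. rewrite Hv. lra.
    + simpl. lra.
Qed.

Theorem main_core : exists vi vj : R,
    is_Vol (S n) (Piv n w q i) vi /\ is_Vol (S n) (Piv n w q j) vj /\ vj <= vi.
Proof.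
  destruct (is_Vol_exists (S n) (Piv n w q i)) as [vi Hvi]; [exists 1; apply cube_cover; auto|].
  destruct (is_Vol_exists (S n) (Piv n w q j)) as [vj Hvj]; [exists 1; apply cube_cover; auto|].
  exists vi, vj. split; [auto|split; [auto|]].
  destruct Hvi as [_ Hvi2]. apply Hvi2. intros c Hc.
  destruct Hvj as [Hvj1 _]. apply Rnot_lt_le. intros Hlt.
  assert (vj <= c + (vj - c) / 2) by (apply Hvj1; apply transfer; auto; lra).
  lra.
Qed.
End Main.

Theorem mainTheorem9 (n : nat) (w : nat -> R) (q : R) (i j : nat) :
  (i < n)%nat -> (j < n)%nat -> i <> j ->
  w j <= w i -> 0 < w j ->
  exists vi vj : R,
    is_Vol (S n) (Piv n w q i) vi /\
    is_Vol (S n) (Piv n w q j) vj /\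
    vj <= vi.
Proof. intros. apply main_core; auto. Qed.
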